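(* Let $G$ be a connected reflexive graph and let $a,b$ be vertices of $G$ at distance at least $4$ in $G$. Let $G+E$ be the graph obtained from $G$ by adding the edge $E=ab$. Then $H_1(\mathbf{G}+\mathbf{E})\cong H_1(\mathbf{G})\oplus\mathbb{Z}$. More precisely, the map induced by inclusion embeds $H_1(\mathbf{G})$ into $H_1(\mathbf{G}+\mathbf{E})$, and for any closed walk $C$ in $G+E$ that traverses the edge $E$ exactly once, $H_1(\mathbf{G}+\mathbf{E})$ is the direct sum of the image of $H_1(\mathbf{G})$ and the infinite cyclic subgroup generated by $[C]$; in particular, a basis of $H_1(\mathbf{G})$ (when free) together with $[C]$ is a basis of $H_1(\mathbf{G}+\mathbf{E})$.
   Context: A graph is reflexive if every vertex has a loop. For a reflexive graph $G$, its clique complex $\mathbf{G}$ has as $n$-simplices the ordered $(n+1)$-tuples of vertices that are pairwise adjacent or equal; $C_n(\mathbf{G})$ is the free abelian group on the $n$-simplices with boundary $\delta_n[v_0,\dots,v_n]=\sum_i(-1)^i[v_0,\dots,\hat v_i,\dots,v_n]$, and $H_1(\mathbf{G})=\ker\delta_1/\operatorname{im}\delta_2$. A closed walk $(x_0,\dots,x_\ell,x_0)$ is identified with the $1$-cycle $\sum[x_i,x_{i+1}]$ and $[C]$ denotes its homology class. *)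

(* Defs.v *)
From mathcomp Require Import all_boot all_order all_algebra.
Set Implicit Arguments. Unset Strict Implicit. Unset Printing Implicit Defensive.
Import GRing.Theory.
Local Open Scope ring_scope.

(* Formal Z-linear combinations: a chain over simplex type S is a finite list
   of (coefficient, simplex) pairs; two chains are equal as elements of the
   free abelian group iff all their coefficients agree (chain_eq). *)
Definition chain (S : Type) := seq (int * S).

Definition coef (S : eqType) (c : chain S) (s : S) : int :=
  \sum_(p <- c | p.2 == s) p.1.

Definition chain_eq (S : eqType) (c d : chain S) : Prop :=
  forall s, coef c s = coef d s.

Definition chain_scale (S : Type) (n : int) (c : chain S) : chain S :=
  [seq (n * p.1, p.2) | p <- c].

Section Complex.
Variable V : eqType.

Definition bd1 (c : chain (V * V)) : chain V :=
  flatten [seq [:: (p.1, p.2.2); (- p.1, p.2.1)] | p <- c].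

Definition bd2 (c : chain (V * V * V)) : chain (V * V) :=
  flatten [seq [:: (p.1, (p.2.1.2, p.2.2)); (- p.1, (p.2.1.1, p.2.2));
                   (p.1, (p.2.1.1, p.2.1.2))] | p <- c].

(* 1-simplices of the clique complex of the reflexive graph with adjacency e *)
Definition edge_chain (e : rel V) (c : chain (V * V)) : bool :=
  all (fun p => e p.2.1 p.2.2) c.

(* 2-simplices: ordered triples pairwise adjacent (or equal; loops present) *)
Definition tri_chain (e : rel V) (c : chain (V * V * V)) : bool :=
  all (fun p => [&& e p.2.1.1 p.2.1.2, e p.2.1.2 p.2.2 & e p.2.1.1 p.2.2]) c.

Definition is_cycle1 (c : chain (V * V)) : Prop := chain_eq (bd1 c) [::].

Definition is_boundary (e : rel V) (z : chain (V * V)) : Prop :=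
  exists w : chain (V * V * V), tri_chain e w /\ chain_eq z (bd2 w).

Definition reflexive_graph (e : rel V) : Prop := reflexive e /\ symmetric e.

Definition connected (e : rel V) : Prop :=
  forall x y : V, exists p : seq V, path e x p /\ last x p = y.

Definition dist_ge4 (e : rel V) (a b : V) : Prop :=
  forall p : seq V, path e a p -> last a p = b -> (4 <= size p)%N.

Definition add_edge (e : rel V) (a b : V) : rel V :=
  fun x y => [|| e x y, (x == a) && (y == b) | (x == b) && (y == a)].

(* closed walk (x_0, ..., x_l, x_0) given by the list [:: x_0; ...; x_l]:
   its ordered steps and its associated 1-chain sum [x_i, x_{i+1}] *)
Definition walk_steps (w : seq V) : seq (V * V) := zip w (rot 1 w).
Definition walk_chain (w : seq V) : chain (V * V) :=
  [seq (1%:Z, s) | s <- walk_steps w].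
Definition closed_walk (e : rel V) (w : seq V) : bool := (w != [::]) && cycle e w.
Definition traversals (a b : V) (w : seq V) : nat :=
  count (fun s => (s == (a, b)) || (s == (b, a))) (walk_steps w).

End Complex.

(* Main.v *)
Require Import Defs.
From mathcomp Require Import all_boot all_order all_algebra.
From mathcomp Require Import ring.
Set Implicit Arguments. Unset Strict Implicit. Unset Printing Implicit Defensive.
Import GRing.Theory.
Local Open Scope ring_scope.

Section Aux.
Variable S : eqType.

Fixpoint ev (f : S -> int) (c : chain S) : int :=
  if c is p :: c' then p.1 * f p.2 + ev f c' else 0.

Definition ind (s : S) : S -> int := fun q => if q == s then 1 else 0.

Lemma coef_nil s : @coef S [::] s = 0.
Proof. by rewrite /coef big_nil. Qed.
Lemma coef_cons (p : int * S) (c : chain S) (s : S) : coef (p :: c) s = (if p.2 == s then p.1 else 0) + coef c s.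
Proof. rewrite /coef big_cons; by case: ifP; rewrite ?add0r. Qed.

Lemma coef_ev c s : coef c s = ev (ind s) c.
Proof.
elim: c => [|p c IH] /=; first by rewrite coef_nil.
by rewrite coef_cons IH /ind; case: ifP => _; rewrite ?mulr1 ?mulr0.
Qed.

Lemma ev_cat f c d : ev f (c ++ d) = ev f c + ev f d.
Proof. elim: c => [|p c IH] /=; [by rewrite add0r | by rewrite IH addrA]. Qed.

Lemma ev_scale f n c : ev f (chain_scale n c) = n * ev f c.
Proof. elim: c => [|p c IH] /=; [by rewrite mulr0 | rewrite IH; ring]. Qed.

Lemma ev_ext f g c : (forall q, q \in map snd c -> f q = g q) -> ev f c = ev g c.
Proof.
elim: c => [|p c IH] //= H.
rewrite H ?inE ?eqxx // IH // => q Hq; apply: H; by rewrite inE Hq orbT.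
Qed.

Lemma ev_ext_all f g c : (forall q, f q = g q) -> ev f c = ev g c.
Proof. by move=> H; apply: ev_ext => q _. Qed.

Lemma ev_lin k1 k2 f g c :
  ev (fun q => k1 * f q + k2 * g q) c = k1 * ev f c + k2 * ev g c.
Proof. elim: c => [|p c IH] /=; [ring | rewrite IH; ring]. Qed.

Lemma ev_sum L f c : uniq L -> {subset map snd c <= L} ->
  ev f c = \sum_(s <- L) coef c s * f s.
Proof.
move=> uL; elim: c => [|p c IH] /= sub.
  by rewrite big1 // => s _; rewrite coef_nil mul0r.
under eq_bigr => s _ do rewrite coef_cons mulrDl.
rewrite big_split /= IH; last by move=> q Hq; apply: sub; rewrite inE Hq orbT.
congr (_ + _).
have pL : p.2 \in L by apply: sub; rewrite inE eqxx.
rewrite (perm_big _ (perm_to_rem pL)) big_cons eqxx big1_seq /= ?addr0 //.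
move=> s Hs; case: eqP => [E|]; last by rewrite mul0r.
by move: Hs; rewrite -E mem_rem_uniqF.
Qed.

Lemma chain_eq_ev f c d : chain_eq c d -> ev f c = ev f d.
Proof.
move=> E; set L := undup (map snd (c ++ d)).
have uL : uniq L by apply: undup_uniq.
rewrite (@ev_sum L) ?(@ev_sum L f d) //; first by apply: eq_bigr => s _; rewrite E.
all: by move=> q Hq; rewrite mem_undup map_cat mem_cat Hq ?orbT.
Qed.

Lemma ev_chain_eq c d : (forall s, ev (ind s) c = ev (ind s) d) -> chain_eq c d.
Proof. by move=> H s; rewrite !coef_ev. Qed.

Lemma ev_filter (P : pred S) f c :
  ev f (filter (fun p => P p.2) c) = ev (fun q => if P q then f q else 0) c.
Proof.
elim: c => [|p c IH] //=; case: ifP => _ /=; rewrite IH //; ring.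
Qed.

End Aux.

Section Bd.
Variable V : eqType.

Lemma ev_bd1 (f : V -> int) c : ev f (bd1 c) = ev (fun q => f q.2 - f q.1) c.
Proof. elim: c => [|p c IH] //=. rewrite IH. ring. Qed.

Lemma ev_bd2 (f : V * V -> int) c :
  ev f (bd2 c) = ev (fun t => f (t.1.2, t.2) - f (t.1.1, t.2) + f (t.1.1, t.1.2)) c.
Proof. elim: c => [|p c IH] //=. rewrite IH. ring. Qed.

End Bd.
Section Walk.
Variable V : eqType.

Lemma path_zip (e : rel V) x p y :
  all (fun s => e s.1 s.2) (zip (x :: p) (rcons p y)) = path e x (rcons p y).
Proof. by elim: p x => [|z p IH] x //=; rewrite IH. Qed.

Lemma walk_edges (e : rel V) w : closed_walk e w ->
  all (fun s => e s.1 s.2) (walk_steps w).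
Proof.
case: w => [|x w] //= /andP[_ H].
by rewrite /walk_steps rot1_cons path_zip.
Qed.

Lemma ev_walk f (w : seq V) : ev f (walk_chain w) = \sum_(s <- walk_steps w) f s.
Proof.
rewrite /walk_chain; elim: (walk_steps w) => [|s l IH] /=; first by rewrite big_nil.
by rewrite big_cons IH mul1r.
Qed.

Lemma zip_sum (g : V -> int) l1 l2 : size l1 = size l2 ->
  \sum_(s <- zip l1 l2) (g s.2 - g s.1) = \sum_(x <- l2) g x - \sum_(x <- l1) g x.
Proof.
elim: l1 l2 => [|x l1 IH] [|y l2] //= H; first by rewrite !big_nil subr0.
case: H => H; rewrite !big_cons IH //; ring.
Qed.

Lemma walk_cycle (g : V -> int) w : ev (fun q => g q.2 - g q.1) (walk_chain w) = 0.
Proof.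
rewrite ev_walk /walk_steps zip_sum ?size_rot //.
by rewrite (perm_big _ (_ : perm_eq (rot 1 w) w)) ?subrr // perm_rot.
Qed.

End Walk.
Section Graph.
Variable V : eqType.
Implicit Types (adj : rel V) (a b : V).

Definition abP a b (x : V) := (x == a) || (x == b).

Lemma dist_neq adj a b : dist_ge4 adj a b -> a != b.
Proof. by move=> D; apply/eqP => E; have := D [::]; rewrite /= E => /(_ isT erefl). Qed.

Lemma dist_nadj adj a b : dist_ge4 adj a b -> adj a b = false.
Proof. by move=> D; apply/negbTE/negP => H; have := D [:: b]; rewrite /= H => /(_ isT erefl). Qed.

Lemma dist_nocommon adj a b w : dist_ge4 adj a b -> adj a w -> adj w b -> False.
Proof. by move=> D H1 H2; have := D [:: w; b]; rewrite /= H1 H2 => /(_ isT erefl). Qed.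

Lemma ae_adjl adj a b x y : ~~ abP a b x -> add_edge adj a b x y -> adj x y.
Proof.
rewrite /abP negb_or => /andP[/negbTE Ha /negbTE Hb].
by rewrite /add_edge Ha Hb /= !orbF.
Qed.

Lemma ae_adjr adj a b x y : ~~ abP a b y -> add_edge adj a b x y -> adj x y.
Proof.
rewrite /abP negb_or => /andP[/negbTE Ha /negbTE Hb].
by rewrite /add_edge Ha Hb /= !andbF !orbF.
Qed.

Lemma ae_nadj adj a b x y : add_edge adj a b x y -> ~~ adj x y ->
  ((x == a) && (y == b)) || ((x == b) && (y == a)).
Proof. by rewrite /add_edge => /orP[->|//]. Qed.

Lemma key adj a b x y z : symmetric adj -> dist_ge4 adj a b ->
  ~~ abP a b x -> adj x y -> adj x z -> add_edge adj a b y z -> adj y z.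
Proof.
move=> Sy D Hx Hy Hz Hyz; apply/negPn/negP => N.
case/orP: (ae_nadj Hyz N) => /andP[/eqP E1 /eqP E2]; subst.
  by apply: (dist_nocommon D _ Hz); rewrite Sy.
by apply: (dist_nocommon D _ Hy); rewrite Sy.
Qed.

Lemma tri_cases adj a b x y z : symmetric adj -> dist_ge4 adj a b ->
  add_edge adj a b x y -> add_edge adj a b y z -> add_edge adj a b x z ->
  (adj x y && adj y z && adj x z) \/ [/\ abP a b x, abP a b y & abP a b z].
Proof.
move=> Sy D Hxy Hyz Hxz.
have [/and3P[? ? ?]|] := boolP [&& abP a b x, abP a b y & abP a b z]; first by right.
rewrite !negb_and => /or3P[Nx|Ny|Nz]; left.
- have Axy := ae_adjl Nx Hxy; have Axz := ae_adjl Nx Hxz.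
  by rewrite Axy Axz (key Sy D Nx Axy Axz Hyz).
- have Ayx : adj y x by rewrite Sy (ae_adjr Ny Hxy).
  have Ayz := ae_adjl Ny Hyz.
  by rewrite -Sy Ayx Ayz (key Sy D Ny Ayx Ayz Hxz).
- have Azx : adj z x by rewrite Sy (ae_adjr Nz Hxz).
  have Azy : adj z y by rewrite Sy (ae_adjr Nz Hyz).
  have Hyx : add_edge adj a b x y by [].
  rewrite (key Sy D Nz Azx Azy Hxy) -Sy Azy.
  by rewrite -Sy Azx.
Qed.

End Graph.
Section Parts.
Variable V : eqType.
Implicit Types (adj : rel V) (a b : V).

Definition T2 (f : V * V -> int) (t : V * V * V) : int :=
  f (t.1.2, t.2) - f (t.1.1, t.2) + f (t.1.1, t.1.2).

Definition om a b (q : V * V) : int := ind (a, b) q - ind (b, a) q.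

Definition mask a b (f : V * V -> int) (q : V * V) : int :=
  if (q == (a, b)) || (q == (b, a)) then 0 else f q.

Lemma ab_ba a b : a != b -> ((a, b) == (b, a)) = false.
Proof. by move=> N; rewrite xpair_eqE (negbTE N). Qed.

Lemma adj_notab adj a b u v : dist_ge4 adj a b -> symmetric adj -> adj u v ->
  ((u, v) == (a, b)) = false /\ ((u, v) == (b, a)) = false.
Proof.
move=> D Sy H; split; apply/negbTE/negP => /eqP [E1 E2]; subst.
  by rewrite (dist_nadj D) in H.
by rewrite Sy (dist_nadj D) in H.
Qed.

Lemma om_adj adj a b u v : dist_ge4 adj a b -> symmetric adj -> adj u v ->
  om a b (u, v) = 0.
Proof. by move=> D Sy H; case: (adj_notab D Sy H) => E1 E2; rewrite /om /ind E1 E2 subrr. Qed.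

Lemma mask_adj adj a b f u v : dist_ge4 adj a b -> symmetric adj -> adj u v ->
  mask a b f (u, v) = f (u, v).
Proof. by move=> D Sy H; case: (adj_notab D Sy H) => E1 E2; rewrite /mask E1 E2. Qed.

Lemma om_ab a b u v : a != b -> abP a b u -> abP a b v ->
  om a b (u, v) = (if v == b then 1 else 0) - (if u == b then 1 else 0).
Proof.
move=> N; have N' : b != a by rewrite eq_sym.
move=> /orP[]/eqP-> /orP[]/eqP->; rewrite /om /ind !xpair_eqE !eqxx ?(negbTE N) ?(negbTE N') /=; ring.
Qed.

End Parts.
Section Main.
Variable V : eqType.
Implicit Types (adj : rel V) (a b : V).

Lemma mask_ab a b f (u v : V) : a != b -> abP a b u -> abP a b v ->
  mask a b f (u, v) = if u == v then f (v, v) else 0.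
Proof.
move=> N; have N' : b != a by rewrite eq_sym.
by move=> /orP[]/eqP-> /orP[]/eqP->; rewrite /mask !xpair_eqE !eqxx ?(negbTE N) ?(negbTE N') /=.
Qed.

Definition psi adj (p : int * (V * V * V)) : chain (V * V * V) :=
  let: (k, (x, y, z)) := p in
  if adj x y && adj y z && adj x z then [:: p]
  else [:: (if y == z then k else 0, (z, z, z));
           (if x == z then - k else 0, (z, z, z));
           (if x == y then k else 0, (y, y, y))].

Lemma part1 adj a b z : reflexive adj -> symmetric adj -> dist_ge4 adj a b ->
  edge_chain adj z -> is_boundary (add_edge adj a b) z -> is_boundary adj z.
Proof.
move=> Rf Sy D Ez [w [Tw Eq]].
have N := dist_neq D.
exists (flatten (map (psi adj) w)); split.
  rewrite /tri_chain; elim: w Tw {Eq} => [|p w IH] //= /andP[_ Tw]; rewrite all_cat IH // andbT.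
  case: p => k [[x y] t] /=; case: ifP => //= H; rewrite ?H ?Rf //.
  by rewrite andbT andbA.
apply: ev_chain_eq => s.
rewrite (@ev_ext _ (ind s) (mask a b (ind s))); last first.
  move=> [u v] /mapP[p pz ->]; have := allP Ez p pz.
  by case: p pz => k [u' v'] /= _ H; rewrite (mask_adj _ D Sy H).
rewrite (chain_eq_ev _ Eq) !ev_bd2.
elim: w Tw {Eq} => [|p w IH] //= /andP[Tp Tw]; rewrite ev_cat IH //; congr (_ + _).
case: p Tp => k [[x y] t] /= /and3P[Hxy Hyt Hxt].
case: ifP => [/andP[/andP[H1 H2] H3]|NH].
  rewrite /= (mask_adj _ D Sy H1) (mask_adj _ D Sy H2) (mask_adj _ D Sy H3); ring.
case: (tri_cases Sy D Hxy Hyt Hxt) => [H|[Ax Ay At]]; first by rewrite H in NH.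
rewrite /= !mask_ab //.
by case: (y == t); case: (x == t); case: (x == y); ring.
Qed.

End Main.
Section Part2.
Variable V : eqType.
Implicit Types (adj : rel V) (a b : V).

Lemma ev_zero (S : eqType) (c : chain S) : ev (fun _ => 0) c = 0.
Proof. by elim: c => [|p c IH] //=; rewrite IH mulr0 addr0. Qed.

Lemma ev_om_G adj a b zG : symmetric adj -> dist_ge4 adj a b ->
  edge_chain adj zG -> ev (om a b) zG = 0.
Proof.
move=> Sy D Ez; rewrite (@ev_ext _ _ (fun _ => 0)) ?ev_zero //.
move=> [u v] /mapP[p pz ->]; have := allP Ez p pz.
by case: p pz => k [u' v'] /= _ H; rewrite (om_adj D Sy H).
Qed.

Lemma ev_T2om adj a b w : symmetric adj -> dist_ge4 adj a b ->
  tri_chain (add_edge adj a b) w -> ev (T2 (om a b)) w = 0.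
Proof.
move=> Sy D; have N := dist_neq D.
elim: w => [|p w IH] //= /andP[Tp Tw]; rewrite IH // addr0.
case: p Tp => k [[x y] t] /= /and3P[Hxy Hyt Hxt].
case: (tri_cases Sy D Hxy Hyt Hxt) => [/andP[/andP[H1 H2] H3]|[Ax Ay At]].
  by rewrite /T2 /= (om_adj D Sy H1) (om_adj D Sy H2) (om_adj D Sy H3) !subrr mulr0.
rewrite /T2 /= !om_ab //.
have -> : forall A B C : int, (C - B) - (C - A) + (B - A) = 0 by move=> *; ring.
by rewrite mulr0.
Qed.

Lemma sum_om0 a b l : count (fun s => (s == (a, b)) || (s == (b, a))) l = 0%N ->
  \sum_(s <- l) om a b s = 0.
Proof.
elim: l => [|s l IH] /=; first by rewrite big_nil.
rewrite big_cons; case H: ((s == (a,b)) || (s == (b,a))) => //= /IH ->.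
by move: H; rewrite /om /ind; case: (s == (a,b)); case: (s == (b,a)).
Qed.

Lemma sum_om1 a b l : a != b ->
  count (fun s => (s == (a, b)) || (s == (b, a))) l = 1%N ->
  (\sum_(s <- l) om a b s) * (\sum_(s <- l) om a b s) = 1.
Proof.
move=> N; elim: l => [|s l IH] //=.
rewrite big_cons; case H: ((s == (a,b)) || (s == (b,a))) => /=.
  move=> [] /sum_om0 ->; rewrite addr0.
  have N' : b != a by rewrite eq_sym.
  by case/orP: H => /eqP ->; rewrite /om /ind !eqxx ?ab_ba //=; ring.
rewrite add0n => /IH; move: H; rewrite /om /ind.
by case: (s == (a,b)); case: (s == (b,a)) => //= _; rewrite subrr add0r.
Qed.

End Part2.
Theorem lemma7p4 (V : eqType) (adj : rel V) (a b : V) :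
  reflexive_graph adj -> connected adj -> dist_ge4 adj a b ->
  (* the inclusion-induced map H_1(G) -> H_1(G+E) is injective *)
  (forall z : chain (V * V), edge_chain adj z -> is_cycle1 z ->
     is_boundary (add_edge adj a b) z -> is_boundary adj z) /\
  (* for every closed walk C in G+E traversing E exactly once,
     H_1(G+E) = image of H_1(G) (+) <[C]>, with [C] of infinite order *)
  (forall C : seq V, closed_walk (add_edge adj a b) C -> traversals a b C = 1%N ->
     (forall z : chain (V * V), edge_chain (add_edge adj a b) z -> is_cycle1 z ->
        exists (zG : chain (V * V)) (n : int),
          [/\ edge_chain adj zG, is_cycle1 zG &
              is_boundary (add_edge adj a b)
                (z ++ chain_scale (-1) (zG ++ chain_scale n (walk_chain C)))]) /\
     (forall (zG : chain (V * V)) (n : int), edge_chain adj zG -> is_cycle1 zG ->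
        is_boundary (add_edge adj a b) (zG ++ chain_scale n (walk_chain C)) ->
        n = 0)).
Proof.
move=> [Rf Sy] _ D; have N := dist_neq D; have N' : b != a by rewrite eq_sym.
split; first by move=> z Ez _; apply: part1.
move=> C HC HT.
set sg := ev (om a b) (walk_chain C).
have sg2 : sg * sg = 1 by rewrite /sg ev_walk; apply: sum_om1.
split; last first.
  move=> zG n EzG _ [w [Tw Eq]].
  have := chain_eq_ev (om a b) Eq.
  rewrite ev_cat ev_scale ev_bd2 (ev_om_G Sy D EzG) add0r.
  have := ev_T2om Sy D Tw; rewrite /T2 => -> /eqP.
  rewrite mulf_eq0 => /orP[/eqP //|/eqP sg0].
  by move: sg2; rewrite /sg sg0 mul0r.
move=> z Ez Cz.
set n := sg * ev (om a b) z.
set y := z ++ chain_scale (- n) (walk_chain C).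
have ey : ev (om a b) y = 0.
  rewrite /y ev_cat ev_scale -/sg /n.
  have -> : ev (om a b) z + - (sg * ev (om a b) z) * sg
     = ev (om a b) z * (1 - sg * sg) by ring.
  by rewrite sg2 subrr mulr0.
set x := ev (ind (a, b)) y.
have xba : ev (ind (b, a)) y = x.
  move: ey; rewrite (@ev_ext_all _ _ (fun q => 1 * ind (a, b) q + (-1) * ind (b, a) q)).
    by rewrite ev_lin -/x => /eqP; rewrite mul1r mulN1r subr_eq0 => /eqP.
  by move=> q; rewrite /om; ring.
set P := fun q : V * V => ~~ ((q == (a, b)) || (q == (b, a))).
set zG := filter (fun p => P p.2) y ++ [:: (x, (a, a))].
have key : forall f, ev f y = ev f zG + ev (T2 f) [:: (x, (a, b, a))].
  move=> f; rewrite /zG [in RHS]ev_cat (ev_filter P) /= /T2 /=.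
  rewrite (@ev_ext_all _ f (fun q => 1 * (if P q then f q else 0) +
     1 * (f (a, b) * ind (a, b) q + f (b, a) * ind (b, a) q))); last first.
    move=> q; rewrite /P /ind.
    have [->|Hab] := eqVneq q (a, b); first by rewrite ?eqxx ?ab_ba //=; ring.
    have [->|Hba] := eqVneq q (b, a); first by rewrite ?eqxx ?ab_ba //=; ring.
    by rewrite /=; ring.
  rewrite ev_lin ev_lin -/x xba; ring.
have Ey : edge_chain (add_edge adj a b) y.
  move: Ez; rewrite /edge_chain /y all_cat => -> /=; rewrite all_map.
  move: (walk_edges HC); rewrite /walk_chain all_map.
  by apply: sub_all => s.
have Rae : forall u, add_edge adj a b u u by move=> u; rewrite /add_edge Rf.
exists zG, n; split.
- rewrite /edge_chain /zG all_cat /= Rf !andbT all_filter.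
  apply/allP => p py; apply/implyP => Pp.
  have := allP Ey p py => /= He.
  apply/negPn/negP => Na; move: (ae_nadj He Na) Pp.
  case: p {py He Na} => k [u v] /=; rewrite /P /=.
  by case/orP => /andP[/eqP -> /eqP ->]; rewrite !eqxx ?orbT.
- apply: ev_chain_eq => v; rewrite ev_bd1 /=.
  have := key (fun q => ind v q.2 - ind v q.1); rewrite /T2 /=.
  have -> : ind v a - ind v b - (ind v a - ind v a) + (ind v b - ind v a) = 0 by ring.
  rewrite mulr0 !addr0 => <-.
  rewrite /y ev_cat ev_scale walk_cycle mulr0 addr0.
  have := chain_eq_ev (ind v) Cz; rewrite ev_bd1 => ->; by [].
- exists [:: (x, (a, b, a))]; split.
    by rewrite /tri_chain /= Rae !andbT /add_edge !eqxx /= !orbT.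
  apply: ev_chain_eq => s; rewrite ev_bd2.
  have K := key (ind s); rewrite /y ev_cat ev_scale in K.
  rewrite !(ev_cat, ev_scale).
  set D2 := ev (T2 _) _ in K; rewrite -/D2.
  rewrite -(addKr (ev (ind s) zG) D2) -K /zG ev_cat; ring.
Qed.
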